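(* For every $i\geq0$ we have $$\frac{\sqrt\Delta}{c_{i+1}}\left(1-\frac1{c_ic_{i+1}}\right)<N_i<\frac{\sqrt\Delta}{c_{i+1}},$$ and in particular $\frac{N_i}{\sqrt\Delta}<\frac1{u_{i+1}}$, and $\frac1{u_{i+1}+10}<\frac{N_i}{\sqrt\Delta}$ whenever $u_{i+1}\geq3$.
   Context: $D>1$ squarefree, $K=\mathbb{Q}(\sqrt D)$, $\Delta$ its discriminant, $\alpha'$ the conjugate of $\alpha$ and $N(\alpha)=\alpha\alpha'$. $\omega_D=\sqrt D$ if $D\equiv2,3\pmod4$, $\omega_D=\frac{1+\sqrt D}2$ if $D\equiv1\pmod4$, with continued fraction $\omega_D=[u_0;u_1,u_2,\dots]$. Let $p_{-1}=1,q_{-1}=0,p_0=u_0,q_0=1$, $p_{i+1}=u_{i+1}p_i+p_{i-1}$, $q_{i+1}=u_{i+1}q_i+q_{i-1}$, $\alpha_i=p_i-q_i\omega_D'$, $N_i=|N(\alpha_i)|$, and $c_i=[u_i;u_{i+1},u_{i+2},\dots]$ the complete quotients (so $c_0=\omega_D$). *)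

(* Defs.v *)
From Stdlib Require Import Reals ZArith Lra Lia.
Open Scope R_scope.

Definition squarefree (D : Z) : Prop :=
  forall k : Z, (1 < k)%Z -> ~ (k * k | D)%Z.

(* For squarefree D > 1, D mod 4 is 1, 2 or 3. *)
Definition omega (D : Z) : R :=
  if Z.eqb (Z.modulo D 4) 1 then (1 + sqrt (IZR D)) / 2 else sqrt (IZR D).

Definition omega' (D : Z) : R :=
  if Z.eqb (Z.modulo D 4) 1 then (1 - sqrt (IZR D)) / 2 else - sqrt (IZR D).

Definition discK (D : Z) : Z :=
  if Z.eqb (Z.modulo D 4) 1 then D else (4 * D)%Z.

Fixpoint cq (D : Z) (i : nat) : R :=
  match i with
  | O => omega D
  | S k => / (cq D k - IZR (Int_part (cq D k)))
  end.

Definition pq (D : Z) (i : nat) : Z := Int_part (cq D i).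

(* (p_{i-1}, p_i) with p_{-1} = 1, p_0 = u_0 *)
Fixpoint pp (D : Z) (i : nat) : Z * Z :=
  match i with
  | O => (1%Z, pq D 0)
  | S k => let (a, b) := pp D k in (b, (pq D (S k) * b + a)%Z)
  end.

(* (q_{i-1}, q_i) with q_{-1} = 0, q_0 = 1 *)
Fixpoint qq (D : Z) (i : nat) : Z * Z :=
  match i with
  | O => (0%Z, 1%Z)
  | S k => let (a, b) := qq D k in (b, (pq D (S k) * b + a)%Z)
  end.

Definition p_ (D : Z) (i : nat) : Z := snd (pp D i).
Definition q_ (D : Z) (i : nat) : Z := snd (qq D i).

Definition alpha (D : Z) (i : nat) : R := IZR (p_ D i) - IZR (q_ D i) * omega' D.
Definition alpha_conj (D : Z) (i : nat) : R := IZR (p_ D i) - IZR (q_ D i) * omega D.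

Definition Nrm (D : Z) (i : nat) : R := Rabs (alpha D i * alpha_conj D i).

(* Main.v *)
Require Import Defs.
From Stdlib Require Import Reals ZArith Znumtheory Lra Lia Psatz.
Open Scope R_scope.

Lemma int_nosq (D p q : Z) : (1 < D)%Z -> squarefree D -> q <> 0%Z ->
  (D * q * q)%Z <> (p * p)%Z.
Proof.
  intros HD Hs Hq E.
  set (g := Z.gcd p q).
  assert (Hg0 : g <> 0%Z) by (intro H0; apply Hq; eapply Z.gcd_eq_0_r; exact H0).
  assert (Hc : Z.gcd (p / g) (q / g) = 1%Z) by (apply Z.gcd_div_gcd; auto).
  destruct (Z.gcd_divide_l p q) as [p' Hp]. destruct (Z.gcd_divide_r p q) as [q' Hq'].
  fold g in Hp, Hq'.
  assert (p / g = p')%Z by (rewrite Hp; apply Z.div_mul; auto).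
  assert (q / g = q')%Z by (rewrite Hq'; apply Z.div_mul; auto).
  rewrite H, H0 in Hc.
  assert (E2 : (D * q' * q' = p' * p')%Z).
  { rewrite Hp, Hq' in E. apply (Z.mul_reg_r _ _ (g*g)); [nia|]. lia. }
  assert (Hd : (q' | p' * p')%Z) by (exists (D*q')%Z; lia).
  apply Zgcd_1_rel_prime in Hc.
  assert (Hc' : rel_prime q' p') by (apply rel_prime_sym; auto).
  pose proof (Gauss _ _ _ Hd Hc') as H1.
  assert (H2 : (q' | 1)%Z).
  { rewrite <- (proj2 (Zgcd_1_rel_prime _ _) Hc'). apply Z.gcd_greatest; auto. apply Z.divide_refl. }
  apply Z.divide_1_r in H2.
  assert (ED : D = (p' * p')%Z) by (destruct H2 as [H2|H2]; rewrite H2 in E2; lia).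
  apply (Hs (Z.abs p')).
  - nia.
  - exists 1%Z. rewrite ED. destruct (Z.abs_eq_or_opp p') as [-> | ->]; lia.
Qed.

Definition irr (x : R) := forall p q : Z, q <> 0%Z -> x * IZR q <> IZR p.

Lemma sqrtD_irr D : (1 < D)%Z -> squarefree D -> irr (sqrt (IZR D)).
Proof.
  intros HD Hs p q Hq E.
  apply (int_nosq D p q HD Hs Hq). apply eq_IZR.
  rewrite !mult_IZR, <- E.
  assert (0 <= IZR D) by (apply IZR_le; lia).
  pose proof (sqrt_sqrt _ H). nra.
Qed.

Lemma omega_irr D : (1 < D)%Z -> squarefree D -> irr (omega D).
Proof.
  intros HD Hs p q Hq E. pose proof (sqrtD_irr D HD Hs) as I.
  unfold omega in E. destruct (Z.eqb (D mod 4) 1).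
  - apply (I (2*p - q)%Z q Hq). rewrite minus_IZR, mult_IZR. simpl (IZR 2). lra.
  - exact (I p q Hq E).
Qed.

Lemma irr_step x n : irr x -> irr (/ (x - IZR n)).
Proof.
  intros I p q Hq E.
  assert (Hx : x - IZR n <> 0).
  { intro H0. apply (I n 1%Z); [lia|]. simpl. lra. }
  destruct (Z.eq_dec p 0) as [->|Hp].
  - apply Hq. apply eq_IZR. apply (Rmult_eq_reg_l (/ (x - IZR n))).
    + rewrite E. ring.
    + apply Rinv_neq_0_compat; auto.
  - apply (I (q + n * p)%Z p Hp). rewrite plus_IZR, mult_IZR.
    assert (IZR p <> 0) by (apply not_0_IZR; auto).
    rewrite <- E. field. auto.
Qed.

Lemma cq_irr D i : (1 < D)%Z -> squarefree D -> irr (cq D i).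
Proof.
  intros HD Hs. induction i; simpl.
  - apply omega_irr; auto.
  - apply irr_step; auto.
Qed.

Lemma frac_bd D i : (1 < D)%Z -> squarefree D ->
  0 < cq D i - IZR (pq D i) < 1.
Proof.
  intros HD Hs. pose proof (base_Int_part (cq D i)) as [H1 H2].
  unfold pq. split; [|lra].
  destruct H1 as [H1|H1]; [lra|].
  exfalso. apply (cq_irr D i HD Hs (Int_part (cq D i)) 1%Z); [lia|]. simpl. lra.
Qed.

Lemma cq_S D i : cq D (S i) = / (cq D i - IZR (pq D i)).
Proof. reflexivity. Qed.

Lemma cq_rel D i : (1 < D)%Z -> squarefree D ->
  (cq D i - IZR (pq D i)) * cq D (S i) = 1 /\ 1 < cq D (S i).
Proof.
  intros HD Hs. pose proof (frac_bd D i HD Hs). rewrite cq_S. split.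
  - field. lra.
  - rewrite <- Rinv_1. apply Rinv_lt_contravar; lra.
Qed.

Lemma pq_bd D i : (1 < D)%Z -> squarefree D ->
  IZR (pq D (S i)) < cq D (S i) < IZR (pq D (S i)) + 1 /\ (1 <= pq D (S i))%Z.
Proof.
  intros HD Hs. pose proof (frac_bd D (S i) HD Hs). pose proof (cq_rel D i HD Hs).
  assert (0 < IZR (pq D (S i))).
  { pose proof (base_Int_part (cq D (S i))). unfold pq in *. lra. }
  apply lt_IZR in H1. split; [lra | lia].
Qed.

Lemma key D i : (1 < D)%Z -> squarefree D ->
  omega D * (IZR (snd (qq D i)) * cq D (S i) + IZR (fst (qq D i)))
  = IZR (snd (pp D i)) * cq D (S i) + IZR (fst (pp D i)).
Proof.
  intros HD Hs. induction i.
  - cbn [pp qq fst snd]. destruct (cq_rel D 0 HD Hs) as [H _].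
    change (cq D 0) with (omega D) in H. simpl (IZR 0); simpl (IZR 1).
    set (c := cq D 1) in *. nra.
  - cbn [pp qq]. destruct (pp D i) as [pa pb]. destruct (qq D i) as [qa qb].
    cbn [fst snd] in *. rewrite !plus_IZR, !mult_IZR.
    destruct (cq_rel D (S i) HD Hs) as [H _].
    set (c := cq D (S i)) in *. set (c' := cq D (S (S i))) in *.
    set (u := IZR (pq D (S i))) in *. set (w := omega D) in *.
    set (A := IZR pa) in *. set (B := IZR pb) in *. set (a := IZR qa) in *. set (b := IZR qb) in *.
    apply Rminus_diag_uniq.
    transitivity (c' * (w * (b * c + a) - (B * c + A)) + (w * b - B) * (1 - (c - u) * c')).
    + ring.
    + rewrite IHi, H. ring.
Qed.

Definition det D i := (snd (pp D i) * fst (qq D i) - snd (qq D i) * fst (pp D i))%Z.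

Lemma det_S D i : det D (S i) = (- det D i)%Z.
Proof.
  unfold det. cbn [pp qq]. destruct (pp D i), (qq D i). cbn [fst snd]. ring.
Qed.

Lemma det_pm D i : det D i = 1%Z \/ det D i = (-1)%Z.
Proof.
  induction i.
  - right. unfold det; simpl; lia.
  - rewrite det_S. lia.
Qed.

Lemma det0 D : det D 0 = (-1)%Z.
Proof. unfold det; simpl; lia. Qed.
Lemma det1 D : det D 1 = 1%Z.
Proof. rewrite det_S, det0. reflexivity. Qed.

Lemma q_pos D i : (1 < D)%Z -> squarefree D ->
  (1 <= snd (qq D i))%Z /\ (0 <= fst (qq D i))%Z /\ (i <> O -> (1 <= fst (qq D i))%Z).
Proof.
  intros HD Hs. induction i.
  - simpl. lia.
  - pose proof (proj2 (pq_bd D i HD Hs)).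
    cbn [qq]. destruct (qq D i) as [a b]. cbn [fst snd] in *. nia.
Qed.

Lemma q_S D k : snd (qq D (S k)) = (pq D (S k) * snd (qq D k) + fst (qq D k))%Z
  /\ fst (qq D (S k)) = snd (qq D k).
Proof. cbn [qq]. destruct (qq D k). split; reflexivity. Qed.

Lemma core w w' sD pa pb a b c e :
  sD = w - w' -> w * (b * c + a) = pb * c + pa -> pb * a - b * pa = e ->
  (e = 1 \/ e = -1) -> 1 < sD -> 1 < c -> 1 <= b -> 0 <= a ->
  Rabs ((pb - b * w') * (pb - b * w)) * (b*c+a)^2 = b * sD * (b*c+a) + e.
Proof.
  intros Hs H1 H2 He HsD Hc Hb Ha.
  set (Q := b*c+a).
  assert (E1 : (pb - b * w) * Q = e) by (unfold Q; nra).
  assert (E2 : (pb - b * w') * Q = e + b * sD * Q) by (rewrite Hs; unfold Q in *; nra).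
  assert (HQ : 0 < Q) by (unfold Q; nra).
  assert (HQc : c <= Q) by (unfold Q; nra).
  assert (HbQ : 1 < b * sD * Q).
  { assert (1 < sD * Q) by nra. nra. }
  replace (Q^2) with (Rabs (Q^2)) by (rewrite Rabs_right; [ring| nra]).
  rewrite <- Rabs_mult.
  replace ((pb - b * w') * (pb - b * w) * Q ^ 2) with (((pb - b * w') * Q) * ((pb - b * w) * Q)) by ring.
  rewrite E1, E2, Rabs_mult, (Rabs_right (e + _)) by (destruct He; subst; lra).
  destruct He as [-> | ->]; [rewrite Rabs_R1 | rewrite Rabs_left by lra]; ring.
Qed.

Lemma case0 sD w N c :
  N * c^2 = sD * c - 1 -> 1 < c -> 1 < w -> w < sD ->
  sD / c * (1 - 1 / (w * c)) < N /\ N < sD / c.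
Proof.
  intros H Hc Hw Hws.
  assert (EN : N = (sD * c - 1) / c^2) by (field_simplify_eq; [nra| lra]).
  subst N. split.
  - apply Rminus_gt_0_lt.
    replace ((sD * c - 1) / c ^ 2 - sD / c * (1 - 1 / (w * c))) with ((sD - w)/(w*c^2)) by (field; lra).
    apply Rdiv_lt_0_compat; nra.
  - apply Rminus_gt_0_lt.
    replace (sD / c - (sD * c - 1) / c ^ 2) with (1/c^2) by (field; lra).
    apply Rdiv_lt_0_compat; nra.
Qed.

Lemma case1 sD N c u a b a2 e :
  N * (b*c+a)^2 = b * sD * (b*c+a) + e -> 1 < c -> b = u * a + a2 ->
  1 <= a -> 0 <= a2 -> 1 <= u -> (e = 1 \/ (e = -1 /\ 1 <= a2)) -> 1 < sD ->
  sD / c * (1 - 1 / ((u + /c) * c)) < N /\ N < sD / c.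
Proof.
  intros H Hc Hb Ha Ha2 Hu He HsD.
  assert (Hb1 : 1 <= b) by (rewrite Hb; nra).
  assert (HQc : c <= b*c+a) by nra.
  set (Q := b*c+a) in *.
  assert (EN : N = (b * sD * Q + e) / Q^2) by (rewrite <- H; field; lra).
  subst N. split.
  - apply Rlt_0_minus.
    replace ((b * sD * Q + e) / Q ^ 2 - sD / c * (1 - 1 / ((u + / c) * c)))
      with ((sD * Q * a2 + e * (u*c+1)) / (Q^2 * (u*c+1))).
    2:{ assert (Q <> 0) by lra. assert (u*c+1 <> 0) by nra. unfold Q in *; rewrite Hb in *; field. all: try (repeat split; lra). }
    apply Rdiv_lt_0_compat; [|apply Rmult_lt_0_compat; [apply pow_lt|]; nra].
    assert (0 <= sD*Q*a2) by (apply Rmult_le_pos; [apply Rmult_le_pos|]; lra).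
    destruct He as [-> | [-> Ha2']]; [nra|].
    assert (u*c <= u*a*c) by (assert (0 <= u*c) by nra; nra).
    assert (u*c+1 < Q) by (unfold Q; rewrite Hb; nra).
    assert (Q <= sD * Q * a2) by (assert (Q <= sD*Q) by nra; nra). nra.
  - apply Rlt_0_minus.
    replace (sD / c - (b * sD * Q + e) / Q ^ 2) with ((sD * Q * a - e * c) / (c * Q^2)).
    2:{ assert (Q <> 0) by lra. unfold Q in *; rewrite Hb in *; field. all: try (repeat split; lra). }
    apply Rdiv_lt_0_compat; [|apply Rmult_lt_0_compat; [|apply pow_lt]; nra].
    assert (Q < sD*Q) by nra.
    assert (sD * Q <= sD * Q * a) by (assert (0 <= sD*Q) by nra; nra).
    destruct He as [-> | [-> Ha2']]; lra.
Qed.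

Lemma fin sD N c ci u : 0 < sD -> 1 < ci -> u < c < u + 1 -> 1 <= u ->
  sD / c * (1 - 1 / (ci * c)) < N -> N < sD / c ->
  N / sD < 1 / u /\ (3 <= u -> 1 / (u + 10) < N / sD).
Proof.
  intros Hs Hci Hc Hu HA HB.
  set (X := N / sD).
  assert (EN : N = X * sD) by (unfold X; field; lra).
  rewrite EN in HA, HB.
  assert (HB' : X < 1 / c).
  { apply (Rmult_lt_reg_r sD); auto. replace (1/c*sD) with (sD/c) by (field; lra). lra. }
  assert (HA' : 1/c * (1 - 1/(ci*c)) < X).
  { apply (Rmult_lt_reg_r sD); auto. replace (1/c*(1-1/(ci*c))*sD) with (sD/c*(1-1/(ci*c))) by (field; lra). lra. }
  split.
  - assert (1/c < 1/u) by (apply Rmult_lt_reg_r with (u*c); [nra|]; field_simplify; nra).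
    lra.
  - intros H3.
    assert (1/(ci*c) < 1/c) by (apply Rmult_lt_reg_r with (ci*c); [nra|]; field_simplify; nra).
    assert (1/(u+10) < 1/c * (1 - 1/c)).
    { replace (1/c*(1-1/c)) with ((c-1)/(c*c)) by (field; lra).
      apply Rmult_lt_reg_r with ((u+10)*(c*c)); [nra|].
      field_simplify; [|lra|nra]. nra. }
    assert (0 < 1/c) by (apply Rdiv_lt_0_compat; lra).
    nra.
Qed.

Lemma sD_facts D : (1 < D)%Z ->
  let sD := sqrt (IZR (discK D)) in
  sD = omega D - omega' D /\ 1 < sD /\ 1 < omega D /\ omega D < sD.
Proof.
  intros HD sD. unfold sD, discK, omega, omega'.
  assert (Hs : 1 < sqrt (IZR D)).
  { rewrite <- sqrt_1. apply sqrt_lt_1_alt. split; [lra|]. apply IZR_lt; auto. }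
  destruct (Z.eqb (D mod 4) 1).
  - repeat split; lra.
  - rewrite mult_IZR, sqrt_mult by (apply IZR_le; lia).
    replace (sqrt (IZR 4)) with 2.
    + repeat split; lra.
    + replace (IZR 4) with (2*2) by (simpl; lra). rewrite sqrt_square; lra.
Qed.

Theorem lemma5 (D : Z) (hD : (1 < D)%Z) (hsq : squarefree D) (i : nat) :
  let sD := sqrt (IZR (discK D)) in
  sD / cq D (S i) * (1 - 1 / (cq D i * cq D (S i))) < Nrm D i
  /\ Nrm D i < sD / cq D (S i)
  /\ Nrm D i / sD < 1 / IZR (pq D (S i))
  /\ ((3 <= pq D (S i))%Z -> 1 / (IZR (pq D (S i)) + 10) < Nrm D i / sD).
Proof.
  intros sD.
  destruct (sD_facts D hD) as (HsE & Hs1 & Hw1 & Hws). fold sD in HsE, Hs1, Hws.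
  destruct (pq_bd D i hD hsq) as [Hc Hu].
  assert (Hci : 1 < cq D i).
  { destruct i; [exact Hw1|]. exact (proj2 (cq_rel D i hD hsq)). }
  assert (AB : sD / cq D (S i) * (1 - 1 / (cq D i * cq D (S i))) < Nrm D i
               /\ Nrm D i < sD / cq D (S i)).
  { pose proof (key D i hD hsq) as K.
    pose proof (q_pos D i hD hsq) as (Hb & Ha & Ha').
    pose proof (det_pm D i) as Hdet.
    assert (Hd : IZR (snd (pp D i)) * IZR (fst (qq D i)) - IZR (snd (qq D i)) * IZR (fst (pp D i)) = IZR (det D i)).
    { unfold det. rewrite minus_IZR, !mult_IZR. reflexivity. }
    assert (He : IZR (det D i) = 1 \/ IZR (det D i) = -1) by (destruct Hdet as [-> | ->]; auto).
    destruct (cq_rel D i hD hsq) as [_ Hc1].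
    pose proof (core (omega D) (omega' D) sD _ _ _ _ (cq D (S i)) _ HsE K Hd He Hs1 Hc1
      ltac:(apply IZR_le in Hb; exact Hb) ltac:(apply IZR_le in Ha; exact Ha)) as Co.
    unfold Nrm, alpha, alpha_conj, p_, q_.
    destruct i as [|k].
    - revert Co. cbn [pp qq fst snd] in *. rewrite det0. simpl (IZR 0); simpl (IZR 1).
      intro Co. change (cq D 0) with (omega D).
      apply case0; auto. ring_simplify in Co. ring_simplify. lra.
    - pose proof (q_S D k) as [Eb Ea]. rewrite Eb, Ea in Co. rewrite Eb.
      rewrite plus_IZR, mult_IZR in Co |- *.
      destruct (cq_rel D (S k) hD hsq) as [Hr _].
      assert (Eci : cq D (S k) = IZR (pq D (S k)) + / cq D (S (S k))).
      { field_simplify_eq; [|lra]. lra. }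
      rewrite Eci.
      pose proof (q_pos D k hD hsq) as (Hb2 & Ha2 & Ha2').
      destruct (pq_bd D k hD hsq) as [_ Hu2].
      eapply case1; [exact Co | exact Hc1 | reflexivity | apply IZR_le; exact Hb2
        | apply IZR_le; exact Ha2 | apply IZR_le; exact Hu2 | | exact Hs1].
      destruct k as [|k'].
      + left. rewrite det1. reflexivity.
      + destruct He as [He|He]; [left; exact He| right; split; [exact He|]].
        apply IZR_le. apply Ha2'. discriminate. }
  destruct AB as [HA HB].
  assert (0 < sD) by lra.
  destruct (fin sD (Nrm D i) (cq D (S i)) (cq D i) (IZR (pq D (S i))) H Hci ltac:(lra)
    ltac:(apply IZR_le in Hu; exact Hu) HA HB) as [H3 H4].
  repeat split; auto.
  intro H5. apply H4. apply IZR_le in H5. exact H5.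
Qed.
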